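(* Let $n\ge4$ and $d$ be integers. If \[ b_{n,d}(1,2)+b_{n,d}(2,1)=2\,p_{n,d}(1,2), \] then \[ b_{n,d}(1,3)+b_{n,d}(3,1)=2\,p_{n,d}(1,3). \]
   Context: For a permutation $\pi=\pi_1\cdots\pi_n$ of $[n]$ (one-line notation), an ascent is a position $t$ with $\pi_t<\pi_{t+1}$ and a descent one with $\pi_t>\pi_{t+1}$; the height of a word is its number of ascents minus its number of descents. $\pi$ is a ballot permutation if every prefix $\pi_1\cdots\pi_t$ has nonnegative height. $b_{n,d}(i,j)$ is the number of ballot permutations of $[n]$ with exactly $d$ descents that contain $i\,n\,j$ as a factor ($\pi_t=i,\pi_{t+1}=n,\pi_{t+2}=j$ for some $t$). A cycle $(c_1\cdots c_k)$ means $c_1\mapsto c_2\mapsto\cdots\mapsto c_k\mapsto c_1$; $\operatorname{cdes}(c)=\lvert\{t\in[k]:c_t>c_{t+1}\}\rvert$, $\operatorname{casc}(c)=\lvert\{t\in[k]:c_t<c_{t+1}\}\rvert$ with $c_{k+1}=c_1$; the cyclic weight of a cycle is $\min(\operatorname{cdes}(c),\operatorname{casc}(c))$ and that of a permutation is the sum over its cycles. An odd order permutation has all cycles of odd length. $p_{n,d}(i,j)$ is the number of odd order permutations $\pi$ of $[n]$ with cyclic weight $d$ such that $\pi(i)=n$ and $\pi(n)=j$ (i.e. containing $i\,n\,j$ as a cyclic factor). *)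

(* Defs.v *)
From mathcomp Require Import all_boot all_order all_algebra all_fingroup.
Set Implicit Arguments. Unset Strict Implicit. Unset Printing Implicit Defensive.

(* Permutations of [n] are modelled as s : {perm 'I_n}; the element k : 'I_n
   stands for the number k+1 of [n]. *)

Definition oneline (n : nat) (s : {perm 'I_n}) : seq nat :=
  [seq (s k).+1 | k <- enum 'I_n].

Definition asc (w : seq nat) : nat :=
  count (fun p : nat * nat => p.1 < p.2) (zip w (behead w)).
Definition des (w : seq nat) : nat :=
  count (fun p : nat * nat => p.1 > p.2) (zip w (behead w)).

Definition height (w : seq nat) : int := (Posz (asc w) - Posz (des w))%R.
Definition ballot (w : seq nat) : bool :=
  [forall t : 'I_(size w).+1, (0 <= height (take t w))%R].

Definition b (n : nat) (d : int) (i j : nat) : nat :=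
  #|[set s : {perm 'I_n} | [&& ballot (oneline s),
                              Posz (des (oneline s)) == d &
                              infix [:: i; n; j] (oneline s)]]|.

(* cdes / casc of the cycle of s with support C: number of cyclic
   positions t with c_t > c_{t+1} (resp. <), where c_{t+1} = s c_t *)
Definition cdes (n : nat) (s : {perm 'I_n}) (C : {set 'I_n}) : nat :=
  #|[set x in C | s x < x]|.
Definition casc (n : nat) (s : {perm 'I_n}) (C : {set 'I_n}) : nat :=
  #|[set x in C | x < s x]|.

Definition cyclic_weight (n : nat) (s : {perm 'I_n}) : nat :=
  \sum_(C in porbits s) minn (cdes s C) (casc s C).

Definition odd_order (n : nat) (s : {perm 'I_n}) : bool :=
  [forall C in porbits s, odd #|C|].

Definition cyc_factor (n : nat) (s : {perm 'I_n}) (i j : nat) : bool :=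
  [exists x : 'I_n, exists y : 'I_n,
     [&& x.+1 == i, y.+1 == n, s x == y & (s y).+1 == j]].

Definition p (n : nat) (d : int) (i j : nat) : nat :=
  #|[set s : {perm 'I_n} | [&& odd_order s,
                              Posz (cyclic_weight s) == d &
                              cyc_factor s i j]]|.

(* Main.v *)
Require Import Defs.
From mathcomp Require Import all_boot all_order all_algebra all_fingroup.
From mathcomp Require Import zify.
Import Order.TTheory GRing.Theory Num.Theory.
Set Implicit Arguments. Unset Strict Implicit. Unset Printing Implicit Defensive.

Ltac nlia := repeat match goal with H : context [size _] |- _ => revert H end;
  repeat match goal with |- context [size ?w] => let N := fresh "N" in set N := size w end;
  intros; lia.

Definition stp (w : seq nat) k := nth 0 w k < nth 0 w k.+1.
Definition cntT (g : nat -> bool) m := \sum_(0 <= k < m) (g k : nat).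
Definition cntF (g : nat -> bool) m := \sum_(0 <= k < m) (~~ g k : nat).

Lemma asc_nth (w : seq nat) : asc w = \sum_(0 <= k < (size w).-1) (nth 0 w k < nth 0 w k.+1 : nat).
Proof.
elim: w => [|x w IH]; first by rewrite big_geq.
case: w IH => [|y w] IH; first by rewrite big_geq.
rewrite /asc /= -/(asc (y :: w)) IH /= big_nat_recl //.
Qed.

Lemma des_nth (w : seq nat) : des w = \sum_(0 <= k < (size w).-1) (nth 0 w k.+1 < nth 0 w k : nat).
Proof.
elim: w => [|x w IH]; first by rewrite big_geq.
case: w IH => [|y w] IH; first by rewrite big_geq.
rewrite /des /= -/(des (y :: w)) IH /= big_nat_recl //.
Qed.

Lemma des_stp (w : seq nat) : uniq w -> des w = cntF (stp w) (size w).-1.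
Proof.
move=> Uw; rewrite des_nth /cntF; apply: eq_big_nat => k /andP[_ Hk].
rewrite /stp; have Hne : nth 0 w k != nth 0 w k.+1.
  rewrite nth_uniq //; [by rewrite neq_ltn ltnSn | nlia | nlia].
move: Hne; case: ltngtP => //.
Qed.

Lemma asc_stp (w : seq nat) : asc w = cntT (stp w) (size w).-1.
Proof. by rewrite asc_nth. Qed.

Lemma ballotE (w : seq nat) : uniq w ->
  ballot w <-> (forall m, m < size w -> cntF (stp w) m <= cntT (stp w) m).
Proof.
move=> Uw.
have key : forall t, t <= size w ->
   (0 <= height (take t w))%R = (cntF (stp w) t.-1 <= cntT (stp w) t.-1).
  move=> t Ht; rewrite /height subr_ge0 lez_nat.
  rewrite des_stp ?take_uniq // asc_stp size_take_min (minn_idPl Ht).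
  rewrite /cntF /cntT.
  congr (_ <= _); apply: eq_big_nat => k /andP[_ Hk];
    rewrite /stp !nth_take //; nlia.
split.
  move=> /forallP H m Hm.
  have := H (Ordinal (Hm : m.+1 < (size w).+1)).
  by rewrite key.
move=> H; apply/forallP => t; rewrite key; last by rewrite -ltnS.
case: t => [[|t]] Ht //=; first by rewrite /cntF /cntT !big_geq.
by apply: H; rewrite -ltnS.
Qed.

Lemma cnt_eq (g g' : nat -> bool) m : (forall k, k < m -> g' k = g k) ->
  cntT g' m = cntT g m /\ cntF g' m = cntF g m.
Proof.
move=> H; split; apply: eq_big_nat => k /andP[_ Hk]; by rewrite H.
Qed.

Lemma cnt_split (F : nat -> nat) j m : j.+2 <= m ->
  \sum_(0 <= k < m) F k = \sum_(0 <= k < j) F k + F j + F j.+1 + \sum_(j.+2 <= k < m) F k.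
Proof.
move=> Hm.
rewrite (@big_cat_nat _ _ _ j) //=; last by apply: leq_trans Hm; lia.
rewrite (@big_cat_nat _ _ _ j.+2 j) //=; last lia.
rewrite big_nat_recl // big_nat1 !addnA //.
Qed.

Lemma cnt_swap (g g' : nat -> bool) j m : j.+2 <= m ->
  (forall k, k < m -> k != j -> k != j.+1 -> g' k = g k) ->
  g j -> ~~ g j.+1 -> ~~ g' j -> g' j.+1 ->
  cntT g' m = cntT g m /\ cntF g' m = cntF g m.
Proof.
move=> Hm H gj gj1 g'j g'j1.
rewrite /cntT /cntF !(@cnt_split _ j m) //.
have E1 : \sum_(0 <= k < j) (g' k : nat) = \sum_(0 <= k < j) (g k : nat).
  apply: eq_big_nat => k /andP[_ Hk]; rewrite H //; lia.
have E2 : \sum_(0 <= k < j) (~~ g' k : nat) = \sum_(0 <= k < j) (~~ g k : nat).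
  apply: eq_big_nat => k /andP[_ Hk]; rewrite H //; lia.
have E3 : \sum_(j.+2 <= k < m) (g' k : nat) = \sum_(j.+2 <= k < m) (g k : nat).
  apply: eq_big_nat => k /andP[Hk Hk']; rewrite H //; lia.
have E4 : \sum_(j.+2 <= k < m) (~~ g' k : nat) = \sum_(j.+2 <= k < m) (~~ g k : nat).
  apply: eq_big_nat => k /andP[Hk Hk']; rewrite H //; lia.
rewrite E1 E2 E3 E4.
move: gj gj1 g'j g'j1; case: (g j); case: (g j.+1); case: (g' j); case: (g' j.+1) => //= *.
split; lia.
Qed.

Lemma cnt_S (g : nat -> bool) m : cntT g m.+1 = cntT g m + g m /\ cntF g m.+1 = cntF g m + ~~ g m.
Proof. by rewrite /cntT /cntF !big_nat_recr. Qed.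

Lemma transfer (w w' : seq nat) : size w' = size w -> uniq w -> uniq w' ->
  (forall k, k.+1 < size w -> stp w' k = stp w k) ->
  (ballot w' <-> ballot w) /\ des w' = des w.
Proof.
move=> Hs Uw Uw' H.
have C : forall m, m <= (size w).-1 -> cntT (stp w') m = cntT (stp w) m /\ cntF (stp w') m = cntF (stp w) m.
  move=> m Hm; apply: cnt_eq => k Hk; apply: H; nlia.
split; last by rewrite !des_stp // Hs; case: (C _ (leqnn _)).
rewrite (ballotE Uw) (ballotE Uw') Hs.
split=> B m Hm; have [C1 C2] := C m (ltac:(nlia)); have := B m Hm; rewrite ?C1 ?C2 //.
Qed.

Lemma transfer_swap (u v : seq nat) j : size v = size u -> uniq u -> uniq v ->
  j.+2 < size u ->
  (forall k, k.+1 < size u -> k != j -> k != j.+1 -> stp v k = stp u k) ->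
  stp u j -> ~~ stp u j.+1 -> ~~ stp v j -> stp v j.+1 ->
  des v = des u /\ (ballot v -> ballot u) /\
  (ballot u -> cntF (stp u) j < cntT (stp u) j -> ballot v).
Proof.
move=> Hs Uu Uv Hj H uj uj1 vj vj1.
have C : forall m, m <= (size u).-1 -> m != j.+1 ->
    cntT (stp v) m = cntT (stp u) m /\ cntF (stp v) m = cntF (stp u) m.
  move=> m Hm Hmj; case: (leqP m j) => Hmj'.
    by apply: cnt_eq => k Hk; apply: H; nlia.
  apply: (@cnt_swap _ _ j) => //; first by move/eqP: Hmj; nlia.
  by move=> k Hk; apply: H; nlia.
have [T1 F1] := cnt_S (stp u) j.
have [T2 F2] := cnt_S (stp v) j.
have [T3 F3] : cntT (stp v) j = cntT (stp u) j /\ cntF (stp v) j = cntF (stp u) j.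
  by apply: cnt_eq => k Hk; apply: H; nlia.
split; first by rewrite !des_stp // Hs; case: (C _ (leqnn _)); nlia.
rewrite (ballotE Uu) (ballotE Uv) Hs; split.
  move=> B m Hm; case: (eqVneq m j.+1) => Hmj.
    have := B j (ltac:(nlia)); rewrite Hmj T1 F1 T3 F3.
    move: uj; case: (stp u j) => //= *; nlia.
  have [C1 C2] := C m (ltac:(nlia)) Hmj; rewrite -C1 -C2; exact: B.
move=> B Hv m Hm; case: (eqVneq m j.+1) => Hmj.
  rewrite Hmj T2 F2 T3 F3.
  move: vj; case: (stp v j) => //= *; nlia.
have [C1 C2] := C m (ltac:(nlia)) Hmj; rewrite C1 C2; exact: B.
Qed.


Lemma infix_nthP (p w : seq nat) : infix p w <->
  exists k, k + size p <= size w /\ forall i, i < size p -> nth 0 w (k + i) = nth 0 p i.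
Proof.
split.
  move=> /infixP[s [s' ->]]; exists (size s); split.
    by rewrite !size_cat; nlia.
  by move=> i Hi; rewrite nth_cat ltnNge leq_addr /= addKn nth_cat Hi.
move=> [k [Hk H]]; apply/infixP; exists (take k w), (drop (k + size p) w).
have E : p = take (size p) (drop k w).
  apply: (@eq_from_nth _ 0); first by rewrite size_takel // size_drop; nlia.
  move=> i Hi; rewrite nth_take // nth_drop H //.
rewrite -{1}(cat_take_drop k w); congr (_ ++ _).
by rewrite -{1}(cat_take_drop (size p) (drop k w)) -E drop_drop addnC.
Qed.

Lemma infix3 (a b c : nat) w : infix [:: a; b; c] w <->
  exists k, [/\ k + 3 <= size w, nth 0 w k = a, nth 0 w k.+1 = b & nth 0 w k.+2 = c].
Proof.
rewrite infix_nthP; split.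
  move=> [k [Hk H]]; exists k; split => //.
  - by rewrite -(addn0 k) (H 0).
  - by rewrite -addn1 (H 1).
  - by rewrite -addn2 (H 2).
move=> [k [Hk H0 H1 H2]]; exists k; split => //.
by case=> [|[|[|i]]] //= _; rewrite ?addn0 ?addn1 ?addn2.
Qed.

Lemma infix4 (a b c e : nat) w : infix [:: a; b; c; e] w <->
  exists k, [/\ k + 4 <= size w, nth 0 w k = a, nth 0 w k.+1 = b, nth 0 w k.+2 = c
     & nth 0 w k.+3 = e].
Proof.
rewrite infix_nthP; split.
  move=> [k [Hk H]]; exists k; split => //.
  - by rewrite -(addn0 k) (H 0).
  - by rewrite -addn1 (H 1).
  - by rewrite -addn2 (H 2).
  - by rewrite -addn3 (H 3).
move=> [k [Hk H0 H1 H2 H3]]; exists k; split => //.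
by case=> [|[|[|[|i]]]] //= _; rewrite ?addn0 ?addn1 ?addn2 ?addn3.
Qed.

Lemma infix_map (f : nat -> nat) p w : infix p w -> infix (map f p) (map f w).
Proof. case/infixP => s [s' ->]; rewrite !map_cat; exact: infix_infix. Qed.

Lemma nth_inj (w : seq nat) i j : uniq w -> i < size w -> j < size w ->
  nth 0 w i = nth 0 w j -> i = j.
Proof. by move=> U Hi Hj /eqP; rewrite nth_uniq // => /eqP. Qed.

Lemma outside n (u : seq nat) t (a b c e : nat) : uniq u -> size u = n -> t + 4 <= n ->
  nth 0 u t = a -> nth 0 u t.+1 = b -> nth 0 u t.+2 = c -> nth 0 u t.+3 = e ->
  (forall x, 0 < x -> (x < 4) || (x == n) -> x \in [:: a; b; c; e]) ->
  forall k, k < n -> (k < t) || (t.+3 < k) -> 0 < nth 0 u k -> nth 0 u k <= n ->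
  4 <= nth 0 u k < n.
Proof.
move=> U Hs Ht Ha Hb Hc He Hx k Hk Hkt H1 H2.
case: (boolP ((nth 0 u k < 4) || (nth 0 u k == n))) => Hv; last first.
  move: Hv H2; rewrite negb_or -leqNgt; case: ltngtP => //=; lia.
have := Hx _ H1 Hv; rewrite !inE => /or4P[] /eqP E.
- have := @nth_inj u k t U; rewrite Hs Ha -E => /(_ Hk ltac:(lia) erefl); lia.
- have := @nth_inj u k t.+1 U; rewrite Hs Hb -E => /(_ Hk ltac:(lia) erefl); lia.
- have := @nth_inj u k t.+2 U; rewrite Hs Hc -E => /(_ Hk ltac:(lia) erefl); lia.
- have := @nth_inj u k t.+3 U; rewrite Hs He -E => /(_ Hk ltac:(lia) erefl); lia.
Qed.

Lemma block_steps n (u v : seq nat) t : size u = n -> t + 4 <= n ->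
  (forall k, k < n -> (k < t) || (t.+3 < k) -> 4 <= nth 0 u k < n) ->
  (forall k, k < n -> (k < t) || (t.+3 < k) -> nth 0 v k = nth 0 u k) ->
  nth 0 u t <= 3 -> nth 0 v t <= 3 -> nth 0 u t.+3 <= 3 -> nth 0 v t.+3 <= 3 ->
  forall k, k.+1 < size u -> k != t -> k != t.+1 -> k != t.+2 -> stp v k = stp u k.
Proof.
move=> Hs Ht Hout Heq u0 v0 u3 v3 k Hk H0 H1 H2; rewrite Hs in Hk.
move/eqP: H0 => H0; move/eqP: H1 => H1; move/eqP: H2 => H2.
have O : forall k, k < n -> k < t \/ t.+3 < k -> (k < t) || (t.+3 < k).
  by move=> x _ [] ->; rewrite ?orbT.
rewrite /stp.
case: (ltnP k.+1 t) => Hkt.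
  rewrite (Heq k) ?(Heq k.+1) //; (try apply: O); lia.
case: (eqVneq k.+1 t) => Hkt'.
  rewrite (Heq k); last (by apply: O; lia); last by lia.
  rewrite Hkt'. have := Hout k ltac:(lia) ltac:(apply: O; lia). lia.
case: (eqVneq k t.+3) => Hk3.
  rewrite Hk3 (Heq t.+4); last (by apply: O; lia); last by lia.
  have := Hout t.+4 ltac:(lia) ltac:(apply: O; lia). lia.
have Hk' : t.+3 < k by move/eqP: Hkt'; move/eqP: Hk3; lia.
rewrite (Heq k) ?(Heq k.+1) //; (try apply: O); lia.
Qed.

Definition goodw n (w : seq nat) :=
  [/\ uniq w, size w = n & forall k, k < n -> 0 < nth 0 w k <= n].

Ltac cov := let x := fresh "x" in let Hx := fresh "Hx" in let H := fresh "H" in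
  move=> x Hx H; case/orP: H => [H|/eqP->]; rewrite !inE ?eqxx ?orbT //;
  case: x Hx H => [|[|[|[|x]]]] //= _ _; rewrite ?orbT.

Ltac blia := repeat (case: ltnP => ?); try done; exfalso; lia.

Lemma pairS n (u v : seq nat) t : 4 <= n -> goodw n u -> goodw n v -> t + 4 <= n ->
  nth 0 u t = 2 -> nth 0 u t.+1 = 3 -> nth 0 u t.+2 = n -> nth 0 u t.+3 = 1 ->
  nth 0 v t = 1 -> nth 0 v t.+1 = n -> nth 0 v t.+2 = 2 -> nth 0 v t.+3 = 3 ->
  (forall k, k < n -> (k < t) || (t.+3 < k) -> nth 0 v k = nth 0 u k) ->
  (ballot u <-> ballot v) /\ des u = des v.
Proof.
move=> Hn [Uu Su Ru] [Uv Sv Rv] Ht u0 u1 u2 u3 v0 v1 v2 v3 Heq.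
have Hout := outside Uu Su Ht u0 u1 u2 u3 ltac:(cov).
have Hout' : forall k, k < n -> (k < t) || (t.+3 < k) -> 4 <= nth 0 u k < n.
  by move=> k Hk Ho; case/andP: (Ru k Hk) => R1 R2; apply: Hout.
have St := block_steps Su Ht Hout' Heq ltac:(lia) ltac:(lia) ltac:(lia) ltac:(lia).
have H : forall k, k.+1 < size u -> k != t.+1 -> k != t.+2 -> stp v k = stp u k.
  move=> k Hk H1 H2; case: (eqVneq k t) => [->|H0]; last exact: St.
  by rewrite /stp u0 u1 v0 v1; blia.
have := @transfer_swap u v t.+1 ltac:(nlia) Uu Uv ltac:(nlia) H.
rewrite /stp u1 u2 v1 v2 -/(stp u) -/(stp v).
move=> /(_ ltac:(blia) ltac:(blia) ltac:(blia) ltac:(blia)) [D [Bvu Buv]].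
split; last by [].
split=> // Bu; apply: Buv => //.
have := (ballotE Uu).1 Bu t ltac:(nlia).
have [T1 F1] := cnt_S (stp u) t.
have Hst : stp u t = true by rewrite /stp u0 u1.
rewrite T1 F1 Hst /=; lia. Qed.

Lemma pairT n (u v : seq nat) t : 4 <= n -> goodw n u -> goodw n v -> t + 4 <= n ->
  nth 0 u t = 1 -> nth 0 u t.+1 = n -> nth 0 u t.+2 = 3 -> nth 0 u t.+3 = 2 ->
  nth 0 v t = 3 -> nth 0 v t.+1 = 2 -> nth 0 v t.+2 = n -> nth 0 v t.+3 = 1 ->
  (forall k, k < n -> (k < t) || (t.+3 < k) -> nth 0 v k = nth 0 u k) ->
  (ballot u <-> ballot v) /\ des u = des v.
Proof.
move=> Hn [Uu Su Ru] [Uv Sv Rv] Ht u0 u1 u2 u3 v0 v1 v2 v3 Heq.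
have Hout := outside Uu Su Ht u0 u1 u2 u3 ltac:(cov).
have Hout' : forall k, k < n -> (k < t) || (t.+3 < k) -> 4 <= nth 0 u k < n.
  by move=> k Hk Ho; case/andP: (Ru k Hk) => R1 R2; apply: Hout.
have St := block_steps Su Ht Hout' Heq ltac:(lia) ltac:(lia) ltac:(lia) ltac:(lia).
have H : forall k, k.+1 < size u -> k != t -> k != t.+1 -> stp v k = stp u k.
  move=> k Hk H1 H2; case: (eqVneq k t.+2) => [->|H0]; last exact: St.
  by rewrite /stp u2 u3 v2 v3; blia.
have := @transfer_swap u v t ltac:(nlia) Uu Uv ltac:(nlia) H.
rewrite /stp u0 u1 u2 v0 v1 v2 -/(stp u) -/(stp v).
move=> /(_ ltac:(blia) ltac:(blia) ltac:(blia) ltac:(blia)) [D [Bvu Buv]].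
split; last by [].
split=> // Bu; apply: Buv => //.
have := (ballotE Uu).1 Bu t.+3 ltac:(nlia).
have [T1 F1] := cnt_S (stp u) t.+2.
have [T2 F2] := cnt_S (stp u) t.+1.
have [T3 F3] := cnt_S (stp u) t.
have H0 : stp u t = true by rewrite /stp u0 u1; blia.
have H1 : stp u t.+1 = false by rewrite /stp u1 u2; blia.
have H2 : stp u t.+2 = false by rewrite /stp u2 u3; blia.
rewrite T1 F1 T2 F2 T3 F3 H0 H1 H2 /=; lia.
Qed.


Section MK.
Variable n : nat.
Variables f g : nat -> nat.
Hypothesis fn : forall x, x < n -> f x < n.
Hypothesis gf : forall x, x < n -> g (f x) = x.
Definition mkf (x : 'I_n) : 'I_n := Ordinal (fn (ltn_ord x)).
Lemma mkf_inj : injective mkf.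
Proof.
move=> x y /(congr1 val) /= E; apply: ord_inj.
by rewrite -(gf (ltn_ord x)) -(gf (ltn_ord y)) E.
Qed.
Definition mkp : {perm 'I_n} := perm mkf_inj.
Lemma mkpE x : (mkp x : nat) = f x.
Proof. by rewrite permE. Qed.
End MK.

Definition Vf (f : nat -> nat) v := (f v.-1).+1.

Lemma ol_size n (s : {perm 'I_n}) : size (oneline s) = n.
Proof. by rewrite size_map size_enum_ord. Qed.

Lemma ol_uniq n (s : {perm 'I_n}) : uniq (oneline s).
Proof.
rewrite map_inj_uniq ?enum_uniq // => x y [] /val_inj; exact: perm_inj.
Qed.

Lemma ol_nth n (s : {perm 'I_n}) (k : 'I_n) : nth 0 (oneline s) k = (s k).+1.
Proof. by rewrite (nth_map k) ?size_enum_ord // nth_ord_enum. Qed.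

Lemma ol_good n (s : {perm 'I_n}) : goodw n (oneline s).
Proof.
split; [exact: ol_uniq | exact: ol_size |].
move=> k Hk; rewrite (ol_nth s (Ordinal Hk)) /=.
by have := ltn_ord (s (Ordinal Hk)).
Qed.

Lemma ol_mkp n f g fn gf (s : {perm 'I_n}) :
  oneline (s * @mkp n f g fn gf) = map (Vf f) (oneline s).
Proof.
rewrite /oneline -map_comp; apply: eq_map => k /=.
by rewrite permM mkpE.
Qed.

Lemma nth_mapV (f : nat -> nat) (w : seq nat) k : k < size w ->
  nth 0 (map (Vf f) w) k = Vf f (nth 0 w k).
Proof. by move=> Hk; rewrite (nth_map 0). Qed.

Lemma card_bij (T : finType) (A B : {set T}) (f g : T -> T) :
  cancel f g -> cancel g f ->
  (forall x, x \in A -> f x \in B) -> (forall x, x \in B -> g x \in A) -> #|A| = #|B|.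
Proof.
move=> fK gK fAB gBA; apply/eqP; rewrite eqn_leq; apply/andP; split.
  rewrite -(card_imset A (can_inj fK)); apply: subset_leq_card.
  by apply/subsetP => y /imsetP[x xA ->]; apply: fAB.
rewrite -(card_imset B (can_inj gK)); apply: subset_leq_card.
by apply/subsetP => y /imsetP[x xA ->]; apply: gBA.
Qed.

Definition tf (x : nat) := if x == 1 then 2 else if x == 2 then 1 else x.
Definition kf m x := if x == 0 then 1 else if x == 1 then m.+3
  else if x == m.+3 then 2 else if x == 2 then 0 else x.
Definition lf m x := if x == 1 then 0 else if x == m.+3 then 1
  else if x == 2 then m.+3 else if x == 0 then 2 else x.

Ltac xcase x m := case: x => [|[|[|x]]] Hx /=; rewrite ?eqxx ?eqSS /=;
  try (let H := fresh "H" in case: (eqVneq x m) => H; rewrite /= ?eqxx ?eqSS /= ?(negbTE H) ?H ?eqxx ?eqSS /=); try lia.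

Lemma tf_lt m x : x < m.+4 -> tf x < m.+4. Proof. rewrite /tf ; xcase x m. Qed.
Lemma tfK m x : x < m.+4 -> tf (tf x) = x. Proof. rewrite /tf ; xcase x m. Qed.
Lemma kf_lt m x : x < m.+4 -> kf m x < m.+4. Proof. rewrite /kf ; xcase x m. Qed.
Lemma lf_lt m x : x < m.+4 -> lf m x < m.+4. Proof. rewrite /lf ; xcase x m. Qed.
Lemma kfK m x : x < m.+4 -> lf m (kf m x) = x. Proof. rewrite /lf /kf ; xcase x m. Qed.
Lemma lfK m x : x < m.+4 -> kf m (lf m x) = x. Proof. rewrite /lf /kf ; xcase x m. Qed.

Definition tp m : {perm 'I_m.+4} := mkp (@tf_lt m) (@tfK m).
Definition kp m : {perm 'I_m.+4} := mkp (@kf_lt m) (@kfK m).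
Definition lp m : {perm 'I_m.+4} := mkp (@lf_lt m) (@lfK m).


Lemma tpK m : (tp m * tp m = 1)%g.
Proof. by apply/permP => x; apply: ord_inj; rewrite permM !mkpE perm1 (@tfK m). Qed.
Lemma kpK m : (kp m * lp m = 1)%g.
Proof. by apply/permP => x; apply: ord_inj; rewrite permM !mkpE perm1 (@kfK m). Qed.
Lemma lpK m : (lp m * kp m = 1)%g.
Proof. by apply/permP => x; apply: ord_inj; rewrite permM !mkpE perm1 (@lfK m). Qed.

Lemma kf_fix m x : 3 <= x <= m.+2 -> kf m x = x.
Proof. rewrite /kf; xcase x m. Qed.
Lemma lf_fix m x : 3 <= x <= m.+2 -> lf m x = x.
Proof. rewrite /lf; xcase x m. Qed.

Definition Bx m (d : int) (P : seq nat -> bool) : {set {perm 'I_m.+4}} :=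
  [set s | [&& ballot (oneline s), Posz (des (oneline s)) == d & P (oneline s)]].

Lemma outside_eq m (s c : {perm 'I_m.+4}) f t (a b c' e : nat) :
  oneline (s * c)%g = map (Vf f) (oneline s) ->
  (forall x, 3 <= x <= m.+2 -> f x = x) -> t + 4 <= m.+4 ->
  nth 0 (oneline s) t = a -> nth 0 (oneline s) t.+1 = b ->
  nth 0 (oneline s) t.+2 = c' -> nth 0 (oneline s) t.+3 = e ->
  (forall x, 0 < x -> (x < 4) || (x == m.+4) -> x \in [:: a; b; c'; e]) ->
  forall k, k < m.+4 -> (k < t) || (t.+3 < k) ->
    nth 0 (oneline (s * c)%g) k = nth 0 (oneline s) k.
Proof.
move=> Hc Hf Ht H0 H1 H2 H3 Hx k Hk Ho.
have [U S R] := ol_good s.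
have := outside U S Ht H0 H1 H2 H3 Hx Hk Ho.
case/andP: (R k Hk) => R1 R2 /(_ R1 R2) O.
rewrite Hc nth_mapV ?S // /Vf Hf; lia.
Qed.

Lemma caseS_fw m d s : s \in Bx m d (infix [:: 1; m.+4; 2; 3]) ->
  (s * kp m)%g \in Bx m d (infix [:: 2; 3; m.+4; 1]).
Proof.
rewrite !inE => /and3P[Bs Ds /infix4[t [Ht w0 w1 w2 w3]]].
have Hc : oneline (s * kp m)%g = map (Vf (kf m)) (oneline s) by apply: ol_mkp.
rewrite ol_size in Ht.
have E := outside_eq Hc (@kf_fix m) Ht w0 w1 w2 w3 ltac:(cov).
have V : forall k, k < m.+4 -> nth 0 (oneline (s * kp m)%g) k = Vf (kf m) (nth 0 (oneline s) k).
  by move=> k Hk; rewrite Hc nth_mapV // ol_size.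
have v0 : nth 0 (oneline (s * kp m)%g) t = 2 by rewrite V ?w0 //; lia.
have v1 : nth 0 (oneline (s * kp m)%g) t.+1 = 3 by rewrite V ?w1 /Vf /kf /= ?eqxx //; lia.
have v2 : nth 0 (oneline (s * kp m)%g) t.+2 = m.+4 by rewrite V ?w2 //; lia.
have v3 : nth 0 (oneline (s * kp m)%g) t.+3 = 1 by rewrite V ?w3 //; lia.
have [Bi De] := pairS (ltac:(lia) : 4 <= m.+4) (ol_good (s * kp m)%g) (ol_good s) Ht
  v0 v1 v2 v3 w0 w1 w2 w3 (fun k Hk Ho => esym (E k Hk Ho)).
rewrite De Ds (proj2 Bi Bs) /=; apply/infix4; exists t; split; rewrite ?ol_size //.
Qed.

Lemma caseS_bw m d s : s \in Bx m d (infix [:: 2; 3; m.+4; 1]) ->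
  (s * lp m)%g \in Bx m d (infix [:: 1; m.+4; 2; 3]).
Proof.
rewrite !inE => /and3P[Bs Ds /infix4[t [Ht w0 w1 w2 w3]]].
have Hc : oneline (s * lp m)%g = map (Vf (lf m)) (oneline s) by apply: ol_mkp.
rewrite ol_size in Ht.
have E := outside_eq Hc (@lf_fix m) Ht w0 w1 w2 w3 ltac:(cov).
have V : forall k, k < m.+4 -> nth 0 (oneline (s * lp m)%g) k = Vf (lf m) (nth 0 (oneline s) k).
  by move=> k Hk; rewrite Hc nth_mapV // ol_size.
have v0 : nth 0 (oneline (s * lp m)%g) t = 1 by rewrite V ?w0 //; lia.
have v1 : nth 0 (oneline (s * lp m)%g) t.+1 = m.+4 by rewrite V ?w1 //; lia.
have v2 : nth 0 (oneline (s * lp m)%g) t.+2 = 2 by rewrite V ?w2 /Vf /lf /= ?eqxx //; lia.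
have v3 : nth 0 (oneline (s * lp m)%g) t.+3 = 3 by rewrite V ?w3 //; lia.
have [Bi De] := pairS (ltac:(lia) : 4 <= m.+4) (ol_good s) (ol_good (s * lp m)%g) Ht
  w0 w1 w2 w3 v0 v1 v2 v3 E.
rewrite -De Ds (proj1 Bi Bs) /=; apply/infix4; exists t; split; rewrite ?ol_size //.
Qed.

Lemma caseT_fw m d s : s \in Bx m d (infix [:: 1; m.+4; 3; 2]) ->
  (s * lp m)%g \in Bx m d (infix [:: 3; 2; m.+4; 1]).
Proof.
rewrite !inE => /and3P[Bs Ds /infix4[t [Ht w0 w1 w2 w3]]].
have Hc : oneline (s * lp m)%g = map (Vf (lf m)) (oneline s) by apply: ol_mkp.
rewrite ol_size in Ht.
have E := outside_eq Hc (@lf_fix m) Ht w0 w1 w2 w3 ltac:(cov).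
have V : forall k, k < m.+4 -> nth 0 (oneline (s * lp m)%g) k = Vf (lf m) (nth 0 (oneline s) k).
  by move=> k Hk; rewrite Hc nth_mapV // ol_size.
have v0 : nth 0 (oneline (s * lp m)%g) t = 3 by rewrite V ?w0 //; lia.
have v1 : nth 0 (oneline (s * lp m)%g) t.+1 = 2 by rewrite V ?w1 /Vf /lf /= ?eqxx //; lia.
have v2 : nth 0 (oneline (s * lp m)%g) t.+2 = m.+4 by rewrite V ?w2 //; lia.
have v3 : nth 0 (oneline (s * lp m)%g) t.+3 = 1 by rewrite V ?w3 //; lia.
have [Bi De] := pairT (ltac:(lia) : 4 <= m.+4) (ol_good s) (ol_good (s * lp m)%g) Ht
  w0 w1 w2 w3 v0 v1 v2 v3 E.
rewrite -De Ds (proj1 Bi Bs) /=; apply/infix4; exists t; split; rewrite ?ol_size //.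
Qed.

Lemma caseT_bw m d s : s \in Bx m d (infix [:: 3; 2; m.+4; 1]) ->
  (s * kp m)%g \in Bx m d (infix [:: 1; m.+4; 3; 2]).
Proof.
rewrite !inE => /and3P[Bs Ds /infix4[t [Ht w0 w1 w2 w3]]].
have Hc : oneline (s * kp m)%g = map (Vf (kf m)) (oneline s) by apply: ol_mkp.
rewrite ol_size in Ht.
have E := outside_eq Hc (@kf_fix m) Ht w0 w1 w2 w3 ltac:(cov).
have V : forall k, k < m.+4 -> nth 0 (oneline (s * kp m)%g) k = Vf (kf m) (nth 0 (oneline s) k).
  by move=> k Hk; rewrite Hc nth_mapV // ol_size.
have v0 : nth 0 (oneline (s * kp m)%g) t = 1 by rewrite V ?w0 //; lia.
have v1 : nth 0 (oneline (s * kp m)%g) t.+1 = m.+4 by rewrite V ?w1 //; lia.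
have v2 : nth 0 (oneline (s * kp m)%g) t.+2 = 3 by rewrite V ?w2 /Vf /kf /= ?eqxx //; lia.
have v3 : nth 0 (oneline (s * kp m)%g) t.+3 = 2 by rewrite V ?w3 //; lia.
have [Bi De] := pairT (ltac:(lia) : 4 <= m.+4) (ol_good (s * kp m)%g) (ol_good s) Ht
  v0 v1 v2 v3 w0 w1 w2 w3 (fun k Hk Ho => esym (E k Hk Ho)).
rewrite De Ds (proj2 Bi Bs) /=; apply/infix4; exists t; split; rewrite ?ol_size //.
Qed.

Lemma tf_cmp x y : 0 < x -> 0 < y -> x != y -> ~~ ((x == 2) && (y == 3)) ->
  ~~ ((x == 3) && (y == 2)) -> (Vf tf x < Vf tf y) = (x < y).
Proof.
rewrite /Vf /tf.
case: x => [|[|[|[|x]]]]; case: y => [|[|[|[|y]]]] //= *; blia.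
Qed.

Lemma noadjA n (w : seq nat) a b : uniq w -> size w = n -> a != n -> b != n ->
  infix [:: 1; n; a] w -> ~~ infix [:: 1; n; a; b] w ->
  forall k, k.+1 < n -> ~~ ((nth 0 w k == a) && (nth 0 w k.+1 == b)) &&
                        ~~ ((nth 0 w k == b) && (nth 0 w k.+1 == a)).
Proof.
move=> U S an bn /infix3[t [Ht w0 w1 w2]] NI k Hk.
apply/andP; split; apply/negP => /andP[/eqP E1 /eqP E2].
  have Ek : k = t.+2 by apply: (nth_inj U); rewrite ?S; [nlia| nlia | by rewrite E1 w2].
  move/negP: NI; apply; apply/infix4; exists t; split; rewrite ?S //; first by nlia.
  by rewrite -E2 Ek.
have Ek : k.+1 = t.+2 by apply: (nth_inj U); rewrite ?S; [nlia| nlia | by rewrite E2 w2].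
case: Ek => Ek; move: E1; rewrite Ek w1 => /eqP; rewrite eq_sym (negbTE bn).
done.
Qed.

Lemma noadjB n (w : seq nat) a b : uniq w -> size w = n -> a != n -> b != n ->
  infix [:: a; n; 1] w -> ~~ infix [:: b; a; n; 1] w ->
  forall k, k.+1 < n -> ~~ ((nth 0 w k == a) && (nth 0 w k.+1 == b)) &&
                        ~~ ((nth 0 w k == b) && (nth 0 w k.+1 == a)).
Proof.
move=> U S an bn /infix3[t [Ht w0 w1 w2]] NI k Hk.
apply/andP; split; apply/negP => /andP[/eqP E1 /eqP E2].
  have Ek : k = t by apply: (nth_inj U); rewrite ?S; [nlia| nlia | by rewrite E1 w0].
  move: E2; rewrite Ek w1 => /eqP; rewrite eq_sym (negbTE bn).
  done.
have Ek : k.+1 = t by apply: (nth_inj U); rewrite ?S; [nlia| nlia | by rewrite E2 w0].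
move/negP: NI; apply; apply/infix4; exists k; split; rewrite ?S //; first by nlia.
all: try exact: E1.
all: by rewrite Ek ?w0 ?w1 ?w2.
Qed.

Lemma swap_transfer m (s : {perm 'I_m.+4}) :
  (forall k, k.+1 < m.+4 ->
     ~~ ((nth 0 (oneline s) k == 2) && (nth 0 (oneline s) k.+1 == 3)) &&
     ~~ ((nth 0 (oneline s) k == 3) && (nth 0 (oneline s) k.+1 == 2))) ->
  (ballot (oneline (s * tp m)%g) <-> ballot (oneline s)) /\
  des (oneline (s * tp m)%g) = des (oneline s).
Proof.
move=> NA.
have [U S R] := ol_good s.
have Hc : oneline (s * tp m)%g = map (Vf tf) (oneline s) by apply: ol_mkp.
apply: transfer; rewrite ?ol_size ?ol_uniq //.
move=> k Hk; rewrite /stp Hc !nth_mapV ?S; try lia.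
case/andP: (NA k Hk) => N1 N2.
case/andP: (R k ltac:(lia)) => R1 _; case/andP: (R k.+1 Hk) => R2 _.
apply: tf_cmp => //.
apply/negP => /eqP E; have := nth_inj U _ _ E; rewrite S => /(_ ltac:(lia) Hk); lia.
Qed.

Lemma caseA m d a b s : (a == 2) && (b == 3) || (a == 3) && (b == 2) ->
  s \in Bx m d (fun w => infix [:: 1; m.+4; a] w && ~~ infix [:: 1; m.+4; a; b] w) ->
  (s * tp m)%g \in Bx m d (fun w => infix [:: 1; m.+4; b] w && ~~ infix [:: 1; m.+4; b; a] w).
Proof.
move=> Hab; rewrite !inE => /and3P[Bs Ds /andP[I1 I2]].
have [U S R] := ol_good s.
have Hc : oneline (s * tp m)%g = map (Vf tf) (oneline s) by apply: ol_mkp.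
have Hc2 : map (Vf tf) (oneline (s * tp m)%g) = oneline s.
  by rewrite -(ol_mkp (@tf_lt m) (@tfK m)) -/(tp m) -mulgA tpK mulg1.
have NA : forall k, k.+1 < m.+4 ->
     ~~ ((nth 0 (oneline s) k == 2) && (nth 0 (oneline s) k.+1 == 3)) &&
     ~~ ((nth 0 (oneline s) k == 3) && (nth 0 (oneline s) k.+1 == 2)).
  case/orP: Hab => /andP[/eqP Ea /eqP Eb]; subst a b => k Hk.
    exact: (noadjA U S _ _ I1 I2 Hk).
  rewrite andbC; exact: (noadjA U S _ _ I1 I2 Hk).
have [Bi De] := swap_transfer NA.
rewrite De Ds (proj2 Bi Bs) /=.
apply/andP; split.
  rewrite Hc; have := infix_map (Vf tf) I1.
  by case/orP: Hab => /andP[/eqP-> /eqP->].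
apply/negP => I3; move/negP: I2; apply.
have := infix_map (Vf tf) I3; rewrite Hc2.
by case/orP: Hab => /andP[/eqP-> /eqP->].
Qed.

Lemma caseB m d a b s : (a == 2) && (b == 3) || (a == 3) && (b == 2) ->
  s \in Bx m d (fun w => infix [:: a; m.+4; 1] w && ~~ infix [:: b; a; m.+4; 1] w) ->
  (s * tp m)%g \in Bx m d (fun w => infix [:: b; m.+4; 1] w && ~~ infix [:: a; b; m.+4; 1] w).
Proof.
move=> Hab; rewrite !inE => /and3P[Bs Ds /andP[I1 I2]].
have [U S R] := ol_good s.
have Hc : oneline (s * tp m)%g = map (Vf tf) (oneline s) by apply: ol_mkp.
have Hc2 : map (Vf tf) (oneline (s * tp m)%g) = oneline s.
  by rewrite -(ol_mkp (@tf_lt m) (@tfK m)) -/(tp m) -mulgA tpK mulg1.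
have NA : forall k, k.+1 < m.+4 ->
     ~~ ((nth 0 (oneline s) k == 2) && (nth 0 (oneline s) k.+1 == 3)) &&
     ~~ ((nth 0 (oneline s) k == 3) && (nth 0 (oneline s) k.+1 == 2)).
  case/orP: Hab => /andP[/eqP Ea /eqP Eb]; subst a b => k Hk.
    exact: (noadjB U S _ _ I1 I2 Hk).
  rewrite andbC; exact: (noadjB U S _ _ I1 I2 Hk).
have [Bi De] := swap_transfer NA.
rewrite De Ds (proj2 Bi Bs) /=.
apply/andP; split.
  rewrite Hc; have := infix_map (Vf tf) I1.
  by case/orP: Hab => /andP[/eqP-> /eqP->].
apply/negP => I3; move/negP: I2; apply.
have := infix_map (Vf tf) I3; rewrite Hc2.
by case/orP: Hab => /andP[/eqP-> /eqP->].
Qed.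


Lemma b_split m d (P Q : seq nat -> bool) :
  #|Bx m d P| = #|Bx m d (fun w => P w && Q w)| + #|Bx m d (fun w => P w && ~~ Q w)|.
Proof.
rewrite -(cardsID (Bx m d Q) (Bx m d P)); congr (_ + _); apply: eq_card => s;
  rewrite !inE; set x1 := ballot _; set x2 := (_ == d); set x3 := P _; set x4 := Q _;
  by case: x1; case: x2; case: x3; case: x4.
Qed.

Lemma Bx_ext m d (P Q : seq nat -> bool) : (forall w, P w = Q w) -> Bx m d P = Bx m d Q.
Proof. by move=> H; apply/setP => s; rewrite !inE H. Qed.

Lemma mulKp m (s c c' : {perm 'I_m.+4}) : (c * c' = 1)%g -> (s * c * c')%g = s.
Proof. by move=> H; rewrite -mulgA H mulg1. Qed.

Lemma ballot_sum m d :
  b m.+4 d 1 2 + b m.+4 d 2 1 = b m.+4 d 1 3 + b m.+4 d 3 1.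
Proof.
have E12 := b_split m d (infix [:: 1; m.+4; 2]) (infix [:: 1; m.+4; 2; 3]).
have E21 := b_split m d (infix [:: 2; m.+4; 1]) (infix [:: 3; 2; m.+4; 1]).
have E13 := b_split m d (infix [:: 1; m.+4; 3]) (infix [:: 1; m.+4; 3; 2]).
have E31 := b_split m d (infix [:: 3; m.+4; 1]) (infix [:: 2; 3; m.+4; 1]).
rewrite /b -/(Bx m d _) E12 E21 E13 E31.
rewrite (@Bx_ext m d (fun w => _ && infix [:: 1; m.+4; 2; 3] w) (infix [:: 1; m.+4; 2; 3]));
  last by move=> w; apply/andb_idl => /(@catr_infix _ [:: 3] [:: 1; m.+4; 2]).
rewrite (@Bx_ext m d (fun w => _ && infix [:: 3; 2; m.+4; 1] w) (infix [:: 3; 2; m.+4; 1]));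
  last by move=> w; apply/andb_idl => /(@consl_infix _ [:: 2; m.+4; 1]).
rewrite (@Bx_ext m d (fun w => _ && infix [:: 1; m.+4; 3; 2] w) (infix [:: 1; m.+4; 3; 2]));
  last by move=> w; apply/andb_idl => /(@catr_infix _ [:: 2] [:: 1; m.+4; 3]).
rewrite (@Bx_ext m d (fun w => _ && infix [:: 2; 3; m.+4; 1] w) (infix [:: 2; 3; m.+4; 1]));
  last by move=> w; apply/andb_idl => /(@consl_infix _ [:: 3; m.+4; 1]).
have S1 : #|Bx m d (infix [:: 1; m.+4; 2; 3])| = #|Bx m d (infix [:: 2; 3; m.+4; 1])|.
  apply: (@card_bij _ _ _ (fun s => s * kp m)%g (fun s => s * lp m)%g).
  - by move=> s; apply: mulKp; apply: kpK.
  - by move=> s; apply: mulKp; apply: lpK.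
  - exact: caseS_fw.
  - exact: caseS_bw.
have S2 : #|Bx m d (infix [:: 1; m.+4; 3; 2])| = #|Bx m d (infix [:: 3; 2; m.+4; 1])|.
  apply: (@card_bij _ _ _ (fun s => s * lp m)%g (fun s => s * kp m)%g).
  - by move=> s; apply: mulKp; apply: lpK.
  - by move=> s; apply: mulKp; apply: kpK.
  - exact: caseT_fw.
  - exact: caseT_bw.
have S3 : #|Bx m d (fun w => infix [:: 1; m.+4; 2] w && ~~ infix [:: 1; m.+4; 2; 3] w)| =
          #|Bx m d (fun w => infix [:: 1; m.+4; 3] w && ~~ infix [:: 1; m.+4; 3; 2] w)|.
  apply: (@card_bij _ _ _ (fun s => s * tp m)%g (fun s => s * tp m)%g).
  - by move=> s; apply: mulKp; apply: tpK.
  - by move=> s; apply: mulKp; apply: tpK.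
  - by move=> s; apply: caseA.
  - by move=> s; apply: caseA.
have S4 : #|Bx m d (fun w => infix [:: 2; m.+4; 1] w && ~~ infix [:: 3; 2; m.+4; 1] w)| =
          #|Bx m d (fun w => infix [:: 3; m.+4; 1] w && ~~ infix [:: 2; 3; m.+4; 1] w)|.
  apply: (@card_bij _ _ _ (fun s => s * tp m)%g (fun s => s * tp m)%g).
  - by move=> s; apply: mulKp; apply: tpK.
  - by move=> s; apply: mulKp; apply: tpK.
  - by move=> s; apply: caseB.
  - by move=> s; apply: caseB.
rewrite S1 S2 S3 S4; lia.
Qed.


Section Conj.
Variable n : nat.
Implicit Types s c : {perm 'I_n}.

Lemma porbitJ s c x : porbit (s ^ c)%g (c x) = c @: porbit s x.
Proof.
apply/setP => y; apply/porbitP/imsetP.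
  move=> [i ->]; exists ((s ^+ i)%g x); first exact: mem_porbit.
  by rewrite -conjXg permJ.
move=> [z /porbitP[i ->] ->]; exists i.
by rewrite -conjXg permJ.
Qed.

Lemma porbitsJ s c : porbits (s ^ c)%g = (fun C : {set 'I_n} => c @: C) @: porbits s.
Proof.
apply/setP => D; apply/imsetP/imsetP.
  move=> [y _ ->]; exists (porbit s (c^-1 y)%g); first exact: imset_f.
  by rewrite -{1}(permKV c y) porbitJ.
move=> [C /imsetP[x _ ->] ->]; exists (c x) => //.
by rewrite porbitJ.
Qed.

Lemma card_sum (A : {set 'I_n}) (P : pred 'I_n) :
  #|[set x in A | P x]| = \sum_(x in A) (P x : nat).
Proof.
rewrite -sum1_card big_mkcond [RHS]big_mkcond /=; apply: eq_bigr => x _.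
by rewrite !inE; case: (x \in A); case: (P x).
Qed.

Lemma odd_orderE s : odd_order s = [forall x, odd #|porbit s x|].
Proof.
apply/forallP/forallP.
  by move=> H x; have := H (porbit s x); rewrite imset_f.
by move=> H C; apply/implyP => /imsetP[x _ ->].
Qed.

Lemma odd_orderJ s c : odd_order (s ^ c)%g = odd_order s.
Proof.
rewrite !odd_orderE; apply/forallP/forallP => H x.
  by have := H (c x); rewrite porbitJ card_imset //; exact: perm_inj.
by rewrite -(permKV c x) porbitJ card_imset //; exact: perm_inj.
Qed.

Definition cw2 s (F : 'I_n -> 'I_n -> bool) :=
  \sum_(C in porbits s) minn (\sum_(x in C) (F (s x) x : nat)) (\sum_(x in C) (F x (s x) : nat)).

Lemma cwE s : cyclic_weight s = cw2 s (fun a b => a < b).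
Proof.
by apply: eq_bigr => C _; rewrite /cdes /casc !card_sum.
Qed.

Lemma cwJ s c : cyclic_weight (s ^ c)%g = cw2 s (fun a b => c a < c b).
Proof.
rewrite cwE /cw2 porbitsJ big_imset /=; last first.
  by move=> C D _ _; apply: imset_inj; exact: perm_inj.
apply: eq_bigr => C _.
rewrite !big_imset /=; try by move=> x y _ _; exact: perm_inj.
by congr minn; apply: eq_bigr => x _; rewrite permJ.
Qed.

Lemma porbit_closed s x y : (s x \in porbit s y) = (x \in porbit s y).
Proof.
by rewrite -!eq_porbit_mem; have := porbit_perm s 1 x; rewrite expg1 => ->.
Qed.

End Conj.


Ltac decb := repeat match goal with
  | |- context [?a == ?b] =>
      first [ rewrite (_ : (a == b) = true); last (by apply/eqP; lia)
            | rewrite (_ : (a == b) = false); last (by apply/negbTE/eqP; lia) ]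
  | |- context [?a <= ?b] =>
      first [ rewrite (_ : (a <= b) = true); last (by lia)
            | rewrite (_ : (a <= b) = false); last (by apply/negbTE; rewrite -ltnNge; lia) ]
  end.

Definition sf m x := if x == 1 then 2 else if x == 2 then 1
  else if (3 <= x) && (x <= m.+2) then m + 5 - x else x.

Lemma region m x : x < m.+4 -> x = 0 \/ x = 1 \/ x = 2 \/ (3 <= x /\ x <= m.+2) \/ x = m.+3.
Proof.
case: x => [|[|[|x]]] H; [by left|by right; left|by right; right; left|].
case: (ltnP x m) => Hx; [do 3 right; left | do 4 right]; lia.
Qed.

Lemma sf_lt m x : x < m.+4 -> sf m x < m.+4.
Proof. rewrite /sf => H; case: (region H) => [->|[->|[->|[Hx|->]]]] //=; decb => //=; lia. Qed.
Lemma sfK m x : x < m.+4 -> sf m (sf m x) = x.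
Proof.
rewrite /sf => H; case: (region H) => [->|[->|[->|[Hx|->]]]] //=; decb => //=; decb => //=; lia.
Qed.

Lemma sf_point m x y : x < m.+4 -> y < m.+4 ->
  (x = 0 -> y = m.+3) -> (x = m.+3 -> y = 1) -> (x = 1 -> y = 2) ->
  (x = 2 -> 3 <= y /\ y <= m.+2) ->
  (3 <= x /\ x <= m.+2 -> y = 0 \/ (3 <= y /\ y <= m.+2)) ->
  ((sf m y < sf m x) + (x == 0) + (x == 2) = (x < y) + (x == m.+3) + (y == 0))%N /\
  ((sf m x < sf m y) + (x == m.+3) + (y == 0) = (y < x) + (x == 0) + (x == 2))%N.
Proof.
move=> Hx Hy H0 Hm H1 H2 Hmid; rewrite /sf.
case: (region Hx) => [E|[E|[E|[E|E]]]].
- have Ey := H0 E; subst x y; decb => /=; lia.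
- have Ey := H1 E; subst x y; decb => /=; lia.
- have [Ey1 Ey2] := H2 E; subst x; decb => /=; lia.
- case: (Hmid E) => [Ey|[Ey1 Ey2]].
    subst y; case: E => E1 E2; decb => /=; lia.
  case: E => E1 E2; decb => /=; (repeat case: leqP => ?); lia.
- have Ey := Hm E; subst x y; decb => /=; lia.
Qed.

Lemma tf_cmp2 x y : ~~ ((x == 1) && (y == 2)) -> ~~ ((x == 2) && (y == 1)) ->
  (tf x < tf y) = (x < y).
Proof.
rewrite /tf.
case: x => [|[|[|x]]]; case: y => [|[|[|y]]] //= *; blia.
Qed.


Definition o0 m : 'I_m.+4 := ord0.
Definition om m : 'I_m.+4 := ord_max.
Definition o1 m : 'I_m.+4 := Ordinal (erefl true : 1 < m.+4).
Definition o2 m : 'I_m.+4 := Ordinal (erefl true : 2 < m.+4).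
Definition sp m : {perm 'I_m.+4} := mkp (@sf_lt m) (@sfK m).

Lemma spK m : (sp m * sp m = 1)%g.
Proof. by apply/permP => x; apply: ord_inj; rewrite permM !mkpE perm1 (@sfK m). Qed.

Lemma conjKK m (s c : {perm 'I_m.+4}) : (c * c = 1)%g -> ((s ^ c) ^ c)%g = s.
Proof. by move=> H; rewrite -conjgM H conjg1. Qed.

Lemma sp0 m : sp m (o0 m) = o0 m. Proof. by apply: ord_inj; rewrite mkpE. Qed.
Lemma spm m : sp m (om m) = om m.
Proof. apply: ord_inj; rewrite mkpE /sf /=; decb => //. Qed.
Lemma sp1 m : sp m (o1 m) = o2 m. Proof. by apply: ord_inj; rewrite mkpE. Qed.
Lemma sp2 m : sp m (o2 m) = o1 m. Proof. by apply: ord_inj; rewrite mkpE. Qed.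
Lemma tp0 m : tp m (o0 m) = o0 m. Proof. by apply: ord_inj; rewrite mkpE. Qed.
Lemma tpm m : tp m (om m) = om m. Proof. by apply: ord_inj; rewrite mkpE. Qed.
Lemma tp1 m : tp m (o1 m) = o2 m. Proof. by apply: ord_inj; rewrite mkpE. Qed.
Lemma tp2 m : tp m (o2 m) = o1 m. Proof. by apply: ord_inj; rewrite mkpE. Qed.

Lemma cycE m (s : {perm 'I_m.+4}) j :
  cyc_factor s 1 j = (s (o0 m) == om m) && ((s (om m)).+1 == j).
Proof.
apply/existsP/andP.
  move=> [x /existsP[y /and4P[/eqP Ex /eqP Ey /eqP Sxy /eqP Sy]]].
  have Ex' : x = o0 m by apply/val_inj; rewrite /=; lia.
  have Ey' : y = om m by apply/val_inj; rewrite /=; lia.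
  by rewrite -Ex' -Ey' Sxy Sy !eqxx.
move=> [/eqP E0 /eqP Em]; exists (o0 m); apply/existsP; exists (om m).
by rewrite E0 Em !eqxx.
Qed.

Lemma succ_eq m (x y : 'I_m.+4) : (x.+1 == y.+1) = (x == y).
Proof. by []. Qed.

Lemma permXS (T : finType) (u : {perm T}) i x : (u ^+ i.+1)%g x = u ((u ^+ i)%g x).
Proof. by rewrite expgSr permM. Qed.

Lemma porbit4 (T : finType) (u : {perm T}) a b c e :
  u a = b -> u b = c -> u c = e -> u e = a -> porbit u a = [set a; b; c; e].
Proof.
move=> Ha Hb Hc He; apply/setP => y; apply/porbitP/idP.
  move=> [i ->]; elim: i => [|i IH]; first by rewrite expg0 perm1 !inE eqxx.
  rewrite permXS; move: IH; rewrite !inE => /orP[/orP[/orP[/eqP->|/eqP->]|/eqP->]|/eqP->];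
    rewrite ?Ha ?Hb ?Hc ?He !eqxx ?orbT //.
rewrite !inE => /orP[/orP[/orP[/eqP->|/eqP->]|/eqP->]|/eqP->].
- by exists 0; rewrite expg0 perm1.
- by exists 1; rewrite permXS expg0 perm1.
- by exists 2; rewrite !permXS expg0 perm1 Ha.
- by exists 3; rewrite !permXS expg0 perm1 Ha Hb.
Qed.

Lemma sum_ind n (C : {set 'I_n}) (a : 'I_n) : \sum_(x in C) (x == a : nat) = (a \in C).
Proof.
case: (boolP (a \in C)) => H.
  rewrite (bigD1 a H) eqxx big1 // => x /andP[_ /negbTE ->] //.
rewrite big1 // => x xC; case: eqP => // E; move: H; rewrite -E xC.
done.
Qed.

Lemma cw_tp m (s : {perm 'I_m.+4}) : s (o1 m) != o2 m -> s (o2 m) != o1 m ->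
  cyclic_weight (s ^ tp m)%g = cyclic_weight s.
Proof.
move=> N1 N2.
have K : forall x : 'I_m.+4, ~~ ((s x == 1 :> nat) && (x == 2 :> nat)) /\
                             ~~ ((s x == 2 :> nat) && (x == 1 :> nat)).
  move=> x; split; apply/negP => /andP[/eqP E1 /eqP E2].
    have Ex : x = o2 m by apply/val_inj.
    by move: N2; rewrite -Ex (_ : s x = o1 m) ?eqxx //; apply/val_inj.
  have Ex : x = o1 m by apply/val_inj.
  by move: N1; rewrite -Ex (_ : s x = o2 m) ?eqxx //; apply/val_inj.
rewrite cwJ cwE /cw2; apply: eq_bigr => C _; congr minn; apply: eq_bigr => x _;
  rewrite !mkpE tf_cmp2 //; case: (K x) => // K1 K2; rewrite andbC //.
Qed.

Lemma cw_sp m (u : {perm 'I_m.+4}) : u (o0 m) = om m -> u (om m) = o1 m ->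
  u (o1 m) = o2 m -> u (o2 m) != o0 m ->
  cyclic_weight (u ^ sp m)%g = cyclic_weight u.
Proof.
move=> E0 Em E1 N2.
have F0 : forall x : 'I_m.+4, (x : nat) = 0 -> (u x : nat) = m.+3.
  by move=> x Ex; rewrite (_ : x = o0 m) ?E0 //; apply/val_inj.
have Fm : forall x : 'I_m.+4, (x : nat) = m.+3 -> (u x : nat) = 1.
  by move=> x Ex; rewrite (_ : x = om m) ?Em //; apply/val_inj.
have F1 : forall x : 'I_m.+4, (x : nat) = 1 -> (u x : nat) = 2.
  by move=> x Ex; rewrite (_ : x = o1 m) ?E1 //; apply/val_inj.
have G0 : forall x : 'I_m.+4, (u x : nat) = m.+3 -> (x : nat) = 0.
  move=> x Ex; have : u x = u (o0 m) by rewrite E0; apply/val_inj.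
  by move/perm_inj ->.
have Gm : forall x : 'I_m.+4, (u x : nat) = 1 -> (x : nat) = m.+3.
  move=> x Ex; have : u x = u (om m) by rewrite Em; apply/val_inj.
  by move/perm_inj ->.
have G1 : forall x : 'I_m.+4, (u x : nat) = 2 -> (x : nat) = 1.
  move=> x Ex; have : u x = u (o1 m) by rewrite E1; apply/val_inj.
  by move/perm_inj ->.
have G2 : forall x : 'I_m.+4, (x : nat) = 2 -> (u x : nat) <> 0.
  move=> x Ex Eu; move: N2; rewrite (_ : x = o2 m) in Eu; last by apply/val_inj.
  by rewrite (_ : u (o2 m) = o0 m) ?eqxx //; apply/val_inj.
have P : forall x : 'I_m.+4,
   ((sf m (u x) < sf m x) + ((x : nat) == 0) + ((x : nat) == 2) =
    (x < u x) + ((x : nat) == m.+3) + ((u x : nat) == 0))%N /\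
   ((sf m x < sf m (u x)) + ((x : nat) == m.+3) + ((u x : nat) == 0) =
    (u x < x) + ((x : nat) == 0) + ((x : nat) == 2))%N.
  move=> x; have Hx := ltn_ord x; have Hy := ltn_ord (u x).
  have := F0 x; have := Fm x; have := F1 x; have := G0 x; have := Gm x; have := G1 x.
  have := G2 x.
  move: ((x : nat)) ((u x : nat)) Hx Hy => X Y Hx Hy g2 g1 gm g0 f1 fm f0.
  apply: sf_point => //.
    move=> EX; have := g2 EX; lia.
  move=> EX; lia.
have Ind : forall (C : {set 'I_m.+4}) (a : 'I_m.+4),
    \sum_(x in C) ((x : nat) == a : nat) = (a \in C).
  by move=> C a; rewrite -sum_ind.
rewrite cwJ cwE /cw2; apply: eq_bigr => C /imsetP[y _ ->]; rewrite minnC.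
have Iu : \sum_(x in porbit u y) ((u x : nat) == 0 : nat) = (o0 m \in porbit u y).
  rewrite -[o0 m in RHS](permKV u) porbit_closed -sum_ind.
  by apply: eq_bigr => x _; rewrite -(canF_eq (permK u)).
have M1 : (om m \in porbit u y) = (o0 m \in porbit u y) by rewrite -E0 porbit_closed.
have M2 : (o1 m \in porbit u y) = (o0 m \in porbit u y) by rewrite -Em porbit_closed.
have M3 : (o2 m \in porbit u y) = (o0 m \in porbit u y) by rewrite -E1 porbit_closed M2.
have S1 : \sum_(x in porbit u y) ((sf m (u x) < sf m x) + ((x:nat) == 0) + ((x:nat) == 2))%N
  = \sum_(x in porbit u y) ((x < u x) + ((x:nat) == m.+3) + ((u x : nat) == 0))%N.
  by apply: eq_bigr => x _; exact: (P x).1.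
have S2 : \sum_(x in porbit u y) ((sf m x < sf m (u x)) + ((x:nat) == m.+3) + ((u x : nat) == 0))%N
  = \sum_(x in porbit u y) ((u x < x) + ((x:nat) == 0) + ((x:nat) == 2))%N.
  by apply: eq_bigr => x _; exact: (P x).2.
have I0 : \sum_(x in porbit u y) ((x:nat) == 0 : nat) = (o0 m \in porbit u y) := Ind _ (o0 m).
have I2 : \sum_(x in porbit u y) ((x:nat) == 2 : nat) = (o2 m \in porbit u y) := Ind _ (o2 m).
have Im : \sum_(x in porbit u y) ((x:nat) == m.+3 : nat) = (om m \in porbit u y) := Ind _ (om m).
rewrite !big_split /= in S1 S2.
rewrite Iu I0 I2 Im M1 M3 in S1 S2.
congr minn.
  under eq_bigr => x _ do rewrite !mkpE.
  by move: S2; move/eqP; rewrite !eqn_add2r => /eqP.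
under eq_bigr => x _ do rewrite !mkpE.
by move: S1; move/eqP; rewrite !eqn_add2r => /eqP.
Qed.


Lemma odd4 m (s : {perm 'I_m.+4}) a b c e : s a = b -> s b = c -> s c = e -> s e = a ->
  #|[set a; b; c; e]| = 4 -> ~~ odd_order s.
Proof.
move=> Ha Hb Hc He H4; rewrite odd_orderE; apply/negP => /forallP /(_ a).
by rewrite (porbit4 Ha Hb Hc He) H4.
Qed.

Lemma card4a m : #|[set o0 m; om m; o1 m; o2 m]| = 4.
Proof. by rewrite -!setUA !cardsU1 cards1 !inE. Qed.
Lemma card4b m : #|[set o0 m; om m; o2 m; o1 m]| = 4.
Proof. by rewrite -!setUA !cardsU1 cards1 !inE. Qed.

Definition PP m (d : int) j : {set {perm 'I_m.+4}} :=
  [set s | [&& odd_order s, Posz (cyclic_weight s) == d & cyc_factor s 1 j]].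
Definition A12 m : {set {perm 'I_m.+4}} := [set s : {perm 'I_m.+4} | s (o1 m) == o2 m].
Definition A13 m : {set {perm 'I_m.+4}} := [set s : {perm 'I_m.+4} | s (o2 m) == o1 m].



Lemma val1 m (x : 'I_m.+4) : (x.+1 == 2) = (x == o1 m). Proof. by []. Qed.
Lemma val2 m (x : 'I_m.+4) : (x.+1 == 3) = (x == o2 m). Proof. by []. Qed.

Lemma caseP_a m d s : s \in PP m d 2 :&: A12 m -> (s ^ sp m)%g \in PP m d 3 :&: A13 m.
Proof.
rewrite !inE cycE val1 => /andP[/and3P[O W /andP[/eqP E0 /eqP Em]] /eqP E1].
have N2 : s (o2 m) != o0 m.
  apply/eqP => E2; move: O; apply/negP; exact: (odd4 E0 Em E1 E2 (card4a m)).
have J0 : (s ^ sp m)%g (o0 m) = om m by rewrite -{1}(sp0 m) permJ E0 spm.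
have Jm : (s ^ sp m)%g (om m) = o2 m by rewrite -{1}(spm m) permJ Em sp1.
have J2 : (s ^ sp m)%g (o2 m) = o1 m by rewrite -{1}(sp1 m) permJ E1 sp2.
by rewrite odd_orderJ O cw_sp // W cycE val2 J0 Jm J2 !eqxx.
Qed.

Lemma caseP_b m d s : s \in PP m d 3 :&: A13 m -> (s ^ sp m)%g \in PP m d 2 :&: A12 m.
Proof.
rewrite !inE cycE val2 => /andP[/and3P[O W /andP[/eqP E0 /eqP Em]] /eqP E2].
have N1 : s (o1 m) != o0 m.
  apply/eqP => E1; move: O; apply/negP; exact: (odd4 E0 Em E2 E1 (card4b m)).
have J0 : (s ^ sp m)%g (o0 m) = om m by rewrite -{1}(sp0 m) permJ E0 spm.
have Jm : (s ^ sp m)%g (om m) = o1 m by rewrite -{1}(spm m) permJ Em sp2.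
have J1 : (s ^ sp m)%g (o1 m) = o2 m by rewrite -{1}(sp2 m) permJ E2 sp1.
have J2 : (s ^ sp m)%g (o2 m) != o0 m.
  rewrite -{1}(sp1 m) permJ -(sp0 m); apply: contra N1 => /eqP /perm_inj ->.
  done.
have Wc : cyclic_weight (s ^ sp m)%g = cyclic_weight s.
  by rewrite -(cw_sp J0 Jm J1 J2) conjKK // spK.
by rewrite odd_orderJ O Wc W cycE val1 J0 Jm J1 !eqxx.
Qed.

Lemma caseP_c m d s : s \in PP m d 2 :\: A12 m -> (s ^ tp m)%g \in PP m d 3 :\: A13 m.
Proof.
rewrite !inE cycE val1 => /andP[N1 /and3P[O W /andP[/eqP E0 /eqP Em]]].
have N2 : s (o2 m) != o1 m.
  by rewrite -Em; apply/eqP => /perm_inj.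
have J0 : (s ^ tp m)%g (o0 m) = om m by rewrite -{1}(tp0 m) permJ E0 tpm.
have Jm : (s ^ tp m)%g (om m) = o2 m by rewrite -{1}(tpm m) permJ Em tp1.
have J2 : (s ^ tp m)%g (o2 m) != o1 m.
  rewrite -{1}(tp1 m) permJ -[X in _ != X](tp2 m); apply: contra N1 => /eqP /perm_inj ->.
  done.
by rewrite odd_orderJ O cw_tp // W cycE val2 J0 Jm J2 !eqxx.
Qed.

Lemma caseP_d m d s : s \in PP m d 3 :\: A13 m -> (s ^ tp m)%g \in PP m d 2 :\: A12 m.
Proof.
rewrite !inE cycE val2 => /andP[N2 /and3P[O W /andP[/eqP E0 /eqP Em]]].
have N1 : s (o1 m) != o2 m.
  by rewrite -Em; apply/eqP => /perm_inj.
have J0 : (s ^ tp m)%g (o0 m) = om m by rewrite -{1}(tp0 m) permJ E0 tpm.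
have Jm : (s ^ tp m)%g (om m) = o1 m by rewrite -{1}(tpm m) permJ Em tp2.
have J1 : (s ^ tp m)%g (o1 m) != o2 m.
  rewrite -{1}(tp2 m) permJ -[X in _ != X](tp1 m); apply: contra N2 => /eqP /perm_inj ->.
  done.
by rewrite odd_orderJ O cw_tp // W cycE val1 J0 Jm J1 !eqxx.
Qed.

Lemma p_eq m d : p m.+4 d 1 2 = p m.+4 d 1 3.
Proof.
rewrite /p -/(PP m d 2) -/(PP m d 3).
rewrite -(cardsID (A12 m) (PP m d 2)) -(cardsID (A13 m) (PP m d 3)).
congr (_ + _).
  apply: (@card_bij _ _ _ (fun s => s ^ sp m)%g (fun s => s ^ sp m)%g).
  - by move=> s; rewrite conjKK // spK.
  - by move=> s; rewrite conjKK // spK.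
  - exact: caseP_a.
  - exact: caseP_b.
apply: (@card_bij _ _ _ (fun s => s ^ tp m)%g (fun s => s ^ tp m)%g).
- by move=> s; rewrite conjKK // tpK.
- by move=> s; rewrite conjKK // tpK.
- exact: caseP_c.
- exact: caseP_d.
Qed.

Theorem proposition4p3 (n : nat) (d : int) :
  4 <= n ->
  b n d 1 2 + b n d 2 1 = 2 * p n d 1 2 ->
  b n d 1 3 + b n d 3 1 = 2 * p n d 1 3.
Proof.
case: n => [|[|[|[|m]]]] // _.
by rewrite ballot_sum p_eq.
Qed.
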